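(* Let $G$ be a finite group and $P$ a $p$-subgroup of $G$. Assume $P\le\ker(S(G,P))$ and that $N_G(P)$ is a $p$-group. If $S(N_G(P),P)$ is Brauer indecomposable, then $S(G,P)$ is Brauer indecomposable.
   Context: Throughout, $p$ is a prime and $k$ is an algebraically closed field of characteristic $p$; all modules are finite dimensional. For a $kG$-module $M$, $\ker(M)=\{g\in G: gm=m \text{ for all } m\in M\}$. For $H\le G$, $S(G,H)$ denotes the Scott module: the unique indecomposable direct summand of $\mathrm{Ind}_H^G(k)$ containing the trivial $kG$-module in its socle (equivalently, in its head). For a $kG$-module $M$ and a $p$-subgroup $Q\le G$, the Brauer construction is $M(Q)=M^Q/\sum_{R<Q}\mathrm{Tr}_R^Q(M^R)$, a $kN_G(Q)$-module. $M$ is Brauer indecomposable if for every $p$-subgroup $Q\le G$, $\mathrm{Res}^{N_G(Q)}_{QC_G(Q)} M(Q)$ is indecomposable or zero. *)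

(* Defs.v *)
From HB Require Import structures.
From mathcomp Require Import all_boot all_order all_algebra all_fingroup all_solvable all_character.
Set Implicit Arguments. Unset Strict Implicit. Unset Printing Implicit Defensive.
Import GRing.Theory.
Local Open Scope ring_scope.
Local Open Scope group_scope.

(* Modules are realised as submodules (row spaces) of the regular module kG0
   (right regular representation  regular_repr F G0 ). *)
Section Defs.
Variables (F : fieldType) (gT : finGroupType) (G0 : {group gT}).
Local Notation n := (gcard G0).
Local Notation rG := (regular_repr F G0).

Definition coset_vec (C : {set gT}) : 'rV[F]_n :=
  \sum_(y in C) delta_mx 0 (gring_index G0 y).

(* Ind_H^G0(k) = k[H\G0], the span of the coset sums of the right cosets of H *)
Definition ind_triv (H : {set gT}) : 'M[F]_n :=
  (\sum_(C in rcosets H G0) <<coset_vec C>>)%MS.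

(* The quotient W/T (T <= W, both K-stable) is indecomposable or zero as a
   kK-module: by the correspondence theorem, no decomposition
   W/T = A/T (+) B/T with A/T, B/T nonzero K-submodules. *)
Definition quot_indec_or_zero (K : {set gT}) (W T : 'M[F]_n) :=
  forall A B : 'M[F]_n,
    K \subset rstabs rG A -> K \subset rstabs rG B ->
    (T <= A)%MS -> (A <= W)%MS -> (T <= B)%MS -> (B <= W)%MS ->
    (A + B == W)%MS -> (A :&: B == T)%MS ->
    (A == T)%MS || (B == T)%MS.

Definition mx_indecomposable (U : 'M[F]_n) :=
  mxmodule rG U /\ U != 0 /\ quot_indec_or_zero G0 U 0.

Definition rel_trace (Q R : {set gT}) (W : 'M[F]_n) : 'M[F]_n :=
  W *m \sum_(C in rcosets R Q) rG (repr C).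

Definition fixed_pts (U : 'M[F]_n) (Q : {set gT}) : 'M[F]_n :=
  (U :&: rfix_mx rG Q)%MS.

Definition brauer_den (U : 'M[F]_n) (Q : {group gT}) : 'M[F]_n :=
  (\sum_(R : {group gT} | R \proper Q) rel_trace Q R (fixed_pts U R))%MS.

(* U(Q) = U^Q / sum_{R<Q} Tr_R^Q(U^R), restricted to Q C_G0(Q), is
   indecomposable or zero, for every p-subgroup Q of G0 *)
Definition brauer_indecomposable (p : nat) (U : 'M[F]_n) :=
  forall Q : {group gT}, Q \subset G0 -> p.-group Q ->
    quot_indec_or_zero (Q <*> 'C_G0(Q)) (fixed_pts U Q) (brauer_den U Q).

(* U is (a realisation of) the Scott module S(G0,H): an indecomposable direct
   summand of Ind_H^G0(k) whose socle contains the trivial module, i.e. which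
   contains a nonzero G0-fixed vector. *)
Definition is_scott_module (H : {set gT}) (U : 'M[F]_n) :=
  [/\ mx_indecomposable U,
      (exists2 V : 'M[F]_n, mxmodule rG V &
        (U + V == ind_triv H)%MS && mxdirect (U + V)) &
      (fixed_pts U G0 != 0) ].

End Defs.

Arguments is_scott_module {F gT} G0 H U.
Arguments brauer_indecomposable {F gT} G0 p U.
Arguments mx_indecomposable {F gT} G0 U.
Arguments ind_triv {F gT} G0 H.

(* Main.v *)
Require Import Defs.
From mathcomp Require Import all_boot all_order all_algebra all_fingroup all_solvable all_character.
Set Implicit Arguments. Unset Strict Implicit. Unset Printing Implicit Defensive.
Import GRing.Theory.
Local Open Scope ring_scope.
Local Open Scope group_scope.

Lemma repr_rcosets (gT : finGroupType) (H K : {group gT}) C :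
  H \subset K -> C \in rcosets H K -> repr C \in K.
Proof.
move=> sHK /rcosetsP[x Kx ->]; have /rcosetP[h Hh ->] := mem_repr_rcoset H x.
by rewrite groupM // (subsetP sHK).
Qed.

Lemma rcoset_reprC (gT : finGroupType) (H : {group gT}) (K : {set gT}) C :
  C \in rcosets H K -> H :* repr C = C.
Proof. by case/rcosetsP=> x _ ->; rewrite rcoset_repr. Qed.

Section Reg.
Variables (F : fieldType) (gT : finGroupType) (G : {group gT}).
Local Notation n := (gcard G).
Local Notation rG := (regular_repr F G).

Definition ev (y : gT) : 'rV[F]_n := delta_mx 0 (gring_index G y).

Lemma ev_mul x y : x \in G -> y \in G -> ev y *m rG x = ev (y * x).
Proof. by move=> Gx Gy; rewrite /ev -rowE rowK gring_indexK. Qed.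

Lemma mx_evP m (A B : 'M[F]_(n, m)) :
  (forall y, y \in G -> ev y *m A = ev y *m B) -> A = B.
Proof.
move=> eqAB; apply/row_matrixP => i; rewrite !rowE.
by have := eqAB (enum_val i) (enum_valP i); rewrite /ev gring_valK.
Qed.

Definition coef (w : 'rV[F]_n) y := w 0 (gring_index G y).

Lemma ev_expand (w : 'rV[F]_n) : w = \sum_(y in G) coef w y *: ev y.
Proof.
rewrite big_enum_val {1}[w]row_sum_delta /=.
by apply: eq_bigr => i _; rewrite /coef /ev gring_valK.
Qed.

Lemma gring_index_inj : {in G &, injective (gring_index G)}.
Proof. by move=> x y Gx Gy eq; rewrite -(gring_indexK x Gx) eq gring_indexK. Qed.

Lemma coef_ev y z : y \in G -> z \in G -> coef (ev z) y = (z == y)%:R.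
Proof.
move=> Gy Gz; rewrite /coef /ev mxE /=.
by rewrite (inj_in_eq (@gring_index_inj)) // eq_sym.
Qed.


Lemma coef_mul w x y : x \in G -> y \in G ->
  coef (w *m rG x) y = coef w (y * x^-1).
Proof.
move=> Gx Gy; rewrite {1}[w]ev_expand mulmx_suml /coef summxE.
have Gyx: y * x^-1 \in G by rewrite groupM ?groupV.
rewrite (bigD1 (y * x^-1)) // big1 => [|z /andP[Gz nz]].
  rewrite -scalemxAl ev_mul // mulgKV mxE -/(coef (ev y) y) coef_ev // eqxx.
  by rewrite /= mulr1 addr0.
rewrite -scalemxAl ev_mul // mxE -/(coef (ev (z * x)) y) coef_ev ?groupM //.
by rewrite (canF_eq (mulgK x)) (negbTE nz) mulr0.
Qed.

Lemma coefD w1 w2 y : coef (w1 + w2) y = coef w1 y + coef w2 y.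
Proof. by rewrite /coef mxE. Qed.
Lemma coefZ a w y : coef (a *: w) y = (a * coef w y)%R.
Proof. by rewrite /coef mxE. Qed.

Lemma coef_fix (H : {group gT}) w x y : H \subset G ->
  (w <= rfix_mx rG H)%MS -> x \in H -> y \in G -> coef w (y * x) = coef w y.
Proof.
move=> sHG /rfix_mxP fixw Hx Gy.
have Gx := subsetP sHG x Hx.
by rewrite -{2}(fixw x^-1 (groupVr Hx)) coef_mul ?groupV // invgK.
Qed.

Lemma rfix_sub_ind (P N : {group gT}) : P \subset N -> N \subset G ->
  G \subset 'N(N) -> (rfix_mx rG N <= ind_triv G P)%MS.
Proof.
move=> sPN sNG nNG; apply/rV_subP => w fixw.
have sPG := subset_trans sPN sNG.
have key y x : x \in G -> y \in P :* x -> coef w y = coef w x.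
  move=> Gx /rcosetP[q Pq ->].
  have Nq := subsetP sPN q Pq.
  have -> : q * x = x * (q ^ x) by rewrite mulKVg.
  apply: (coef_fix sNG fixw) => //.
  by rewrite memJ_norm ?(subsetP nNG).
have [/eqP covP triv _] := and3P (rcosets_partition sPG).
rewrite [w]ev_expand -{1}covP big_trivIset //.
apply: summx_sub => C /rcosetsP[x Gx ->].
rewrite (eq_bigr (fun y => (coef w x *: ev y)%R)) => [|y Cy]; last by rewrite (key y x).
rewrite -scaler_sumr scalemx_sub //.
apply: (sumsmx_sup (P :* x)); first by apply/rcosetsP; exists x.
by rewrite genmxE.
Qed.


Lemma coset_vecE (C : {set gT}) : coset_vec F G C = \sum_(y in C) ev y.
Proof. by []. Qed.

Lemma coset_vec_mul (C : {set gT}) x : C \subset G -> x \in G ->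
  coset_vec F G C *m rG x = coset_vec F G (C :* x).
Proof.
move=> sCG Gx; rewrite !coset_vecE mulmx_suml -rcosetE /rcoset big_imset /=.
  by apply: eq_bigr => y Cy; rewrite ev_mul // (subsetP sCG).
by move=> y z _ _; apply: mulIg.
Qed.

Lemma coef_coset (C : {set gT}) y : C \subset G -> y \in G -> coef (coset_vec F G C) y = (y \in C)%:R.
Proof.
move=> sCG Gy; rewrite coset_vecE /coef summxE -/(coef _ _).
have [Cy | nCy] := boolP (y \in C).
  rewrite (bigD1 y) //= big1 => [|z /andP[Cz nz]].
    by rewrite -/(coef (ev y) y) coef_ev // eqxx addr0.
  by rewrite -/(coef (ev z) y) (coef_ev Gy (subsetP sCG z Cz)) (negbTE nz).
rewrite big1 // => z Cz; rewrite -/(coef (ev z) y) (coef_ev Gy (subsetP sCG z Cz)).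
by case: eqP => // ezy; move: nCy; rewrite -ezy Cz.
Qed.

Lemma coset_vec_neq0 (C : {set gT}) : C \subset G -> C != set0 -> coset_vec F G C != 0.
Proof.
move=> sCG /set0Pn[y Cy]; apply/eqP => e0.
have := coef_coset sCG (subsetP sCG y Cy); rewrite e0 Cy /coef mxE => /eqP.
by rewrite eq_sym oner_eq0.
Qed.

Lemma rfix_regular_vec w : (w <= rfix_mx rG G)%MS ->
  w = (coef w 1 *: coset_vec F G G)%R.
Proof.
move=> fixw; rewrite {1}[w]ev_expand coset_vecE scaler_sumr.
apply: eq_bigr => y Gy.
by rewrite -{1}[y]mul1g (coef_fix (subxx G) fixw).
Qed.

Lemma coset_partition_sum (H A : {group gT}) : H \subset A ->
  (\sum_(C in rcosets H A) coset_vec F G C)%R = coset_vec F G A.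
Proof.
move=> sHA; have [/eqP covP triv _] := and3P (rcosets_partition sHA).
rewrite coset_vecE; transitivity (\sum_(y in cover (rcosets H A)) ev y)%R.
  by rewrite big_trivIset.
by rewrite covP.
Qed.

Definition dmx (Z : {set gT}) : 'M[F]_n := diag_mx (\row_i (enum_val i \in Z)%:R).

Lemma ev_dmx (Z : {set gT}) y : y \in G -> ev y *m dmx Z = ((y \in Z)%:R *: ev y)%R.
Proof. by move=> Gy; rewrite /ev -rowE row_diag_mx mxE gring_indexK. Qed.

Lemma dmx_comm (Z Zq : {set gT}) x : x \in G -> (forall y, y \in G -> (y * x \in Zq) = (y \in Z)) ->
  dmx Z *m rG x = rG x *m dmx Zq.
Proof.
move=> Gx eqZ; apply: mx_evP => y Gy; rewrite !mulmxA ev_dmx // -scalemxAl ev_mul //.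
by rewrite ev_dmx ?groupM // eqZ.
Qed.


Local Notation sig := (coset_vec F G G).

Lemma sig_neq0 : sig != 0.
Proof. by apply: coset_vec_neq0 => //; apply/set0Pn; exists 1%g. Qed.

Lemma sig_sub_fix m (M : 'M[F]_(m, n)) : (M <= rfix_mx rG G)%MS -> M != 0 ->
  (sig <= M)%MS.
Proof.
move=> sMf /rowV0Pn[v svM nzv].
have := rfix_regular_vec (submx_trans svM sMf) => ev.
have nzc : coef v 1 != 0 by apply: contraNneq nzv => c0; rewrite ev c0 scale0r.
have -> : sig = ((coef v 1)^-1 *: v)%R by rewrite {2}ev scalerA mulVf // scale1r.
by rewrite scalemx_sub.
Qed.

Lemma fixed_sig (S : 'M[F]_n) : fixed_pts S G != 0 -> (sig <= S)%MS.
Proof.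
move=> nz; apply: submx_trans (sig_sub_fix (capmxSr _ _) nz) _.
exact: capmxSl.
Qed.

Lemma rstab_fix m m2 (A : 'M[F]_(m, n)) (S : 'M[F]_(m2, n)) (N : {set gT}) x :
  N \subset rstab rG S -> (A <= S)%MS -> x \in N -> A *m rG x = A.
Proof.
move=> sN sAS Nx; have /setIdP[_ /eqP fx] := subsetP sN x Nx.
by rewrite -(mulmxKpV sAS) -mulmxA fx.
Qed.

Lemma scott_sylow (p : nat) (P N : {group gT}) (S V : 'M[F]_n) :
  p \in [pchar F]%R -> P \subset N -> N \subset G ->
  N \subset rstab rG S -> mxmodule rG V ->
  (S + V == ind_triv G P)%MS -> mxdirect (S + V) -> (sig <= S)%MS ->
  ~~ (p %| #|N : P|)%N.
Proof.
move=> charFp sPN sNG sNS modV defSV dxSV sigS; apply/negP => pdiv.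
have sPG := subset_trans sPN sNG.
pose Tm := (\sum_(D in rcosets N G) \sum_(C in rcosets P N)
              rG (repr C) *m rG (repr D))%R.
have eT : coset_vec F G P *m Tm = sig.
  rewrite mulmx_sumr -(coset_partition_sum sNG); apply: eq_bigr => D GD.
  rewrite mulmx_sumr (eq_bigr (fun C => coset_vec F G C *m rG (repr D))).
    rewrite -mulmx_suml coset_partition_sum // coset_vec_mul //.
      by rewrite (rcoset_reprC GD).
    exact: repr_rcosets GD.
  move=> C NC; rewrite mulmxA coset_vec_mul ?(rcoset_reprC NC) //.
  exact: (subsetP sNG _ (repr_rcosets sPN NC)).
have sT m (A : 'M[F]_(m, n)) : (A <= S)%MS -> A *m Tm = 0.
  move=> sAS; rewrite mulmx_sumr big1 // => D GD.
  rewrite mulmx_sumr (eq_bigr (fun C => A *m rG (repr D))) => [|C NC].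
    rewrite sumr_const -scaler_nat.
    by move: pdiv; rewrite (dvdn_pcharf charFp) => /eqP->; rewrite scale0r.
  by rewrite mulmxA (rstab_fix sNS sAS) // (repr_rcosets sPN NC).
have vT m (A : 'M[F]_(m, n)) : (A <= V)%MS -> (A *m Tm <= V)%MS.
  move=> sAV; rewrite mulmx_sumr; apply: summx_sub => D GD.
  rewrite mulmx_sumr; apply: summx_sub => C NC; rewrite mulmxA.
  have GrD := repr_rcosets sNG GD.
  have GrC := subsetP sNG _ (repr_rcosets sPN NC).
  apply: submx_trans (mxmoduleP modV _ GrD); rewrite submxMr //.
  by apply: submx_trans (mxmoduleP modV _ GrC); rewrite submxMr.
have eind : (coset_vec F G P <= S + V)%MS.
  rewrite (eqmxP defSV); apply: (sumsmx_sup (gval P)); last by rewrite genmxE.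
  by apply/rcosetsP; exists 1%g; rewrite ?mulg1.
have /sub_addsmxP[[u1 u2] /= de] := eind.
have sigV : (sig <= V)%MS.
  by rewrite -eT de mulmxDl sT ?submxMl // add0r; apply: vT; rewrite submxMl.
have /mxdirect_addsP capSV := dxSV.
move: (congr1 (fun M => sig <= M)%MS capSV); rewrite /= sub_capmx sigS sigV submx0.
by rewrite (negbTE sig_neq0).
Qed.


Lemma cv_sub_ind (P : {group gT}) (C : {set gT}) : C \in rcosets P G ->
  (coset_vec F G C <= ind_triv G P)%MS.
Proof. by move=> PC; apply: (sumsmx_sup C) => //; rewrite genmxE. Qed.

Lemma ind_sub_rfix (P : {group gT}) : P \subset G -> G \subset 'N(P) ->
  (ind_triv G P <= rfix_mx rG P)%MS.
Proof.
move=> sPG nPG; apply/sumsmx_subP => C /rcosetsP[x Gx ->]; rewrite genmxE.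
apply/rfix_mxP => q Pq; have Gq := subsetP sPG q Pq.
rewrite coset_vec_mul ?groupM ?mul_subG ?sub1set // -rcosetM.
have -> : x * q = (q ^ x^-1) * x by rewrite conjgE invgK -!mulgA mulVg mulg1.
by rewrite rcosetM rcoset_id // memJ_norm ?groupV ?(subsetP nPG).
Qed.

Lemma index_pdiv (p : nat) (Q R : {group gT}) : p.-group Q -> R \proper Q ->
  (p %| #|Q : R|)%N.
Proof.
move=> pQ /andP[sRQ nQR].
have pn : p.-nat #|Q : R| := pnat_dvd (dvdn_indexg Q R) pQ.
have : (1 < #|Q : R|)%N by rewrite indexg_gt1.
case: (p_natP pn) => [[|k] ->]; first by rewrite expn0.
by rewrite expnS dvdn_mulr.
Qed.

Lemma trace_zero (p : nat) (Q R : {group gT}) (W : 'M[F]_n) :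
  p \in [pchar F]%R -> Q \subset G -> p.-group Q -> R \proper Q ->
  (W <= rfix_mx rG Q)%MS -> rel_trace Q R W = 0.
Proof.
move=> charFp sQG pQ pRQ sWf; rewrite /rel_trace mulmx_sumr.
have sRQ := proper_sub pRQ.
rewrite (eq_bigr (fun _ => W)) => [|C QC]; last first.
  by move/rfix_mxP: sWf; apply; apply: repr_rcosets QC.
rewrite sumr_const -scaler_nat.
by move: (index_pdiv pQ pRQ); rewrite (dvdn_pcharf charFp) => /eqP->; rewrite scale0r.
Qed.

Lemma den_zero (p : nat) (Q : {group gT}) (S : 'M[F]_n) :
  p \in [pchar F]%R -> Q \subset G -> p.-group Q ->
  (S <= rfix_mx rG Q)%MS -> (brauer_den S Q :=: (0 : 'M[F]_n))%MS.
Proof.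
move=> charFp sQG pQ sSf; apply/eqmxP; rewrite sub0mx andbT.
apply/sumsmx_subP => R pRQ; rewrite (trace_zero charFp) //.
by apply: submx_trans (capmxSl _ _) sSf.
Qed.


Lemma dmxD (Z : {set gT}) : (dmx Z + dmx (~: Z))%R = 1%:M.
Proof.
apply: mx_evP => y Gy; rewrite mulmxDr !ev_dmx // mulmx1 in_setC.
by case: (y \in Z); rewrite ?scale1r ?scale0r ?addr0 ?add0r.
Qed.

Lemma dmxM (Z Z' : {set gT}) : dmx Z *m dmx Z' = dmx (Z :&: Z').
Proof.
apply: mx_evP => y Gy; rewrite mulmxA !ev_dmx // -scalemxAl ev_dmx // scalerA inE.
by case: (y \in Z); case: (y \in Z'); rewrite ?mulr1 ?mulr0.
Qed.

Lemma dmx0 : dmx set0 = 0.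
Proof. by apply: mx_evP => y Gy; rewrite ev_dmx // inE scale0r mulmx0. Qed.

Lemma cv_dmx (C Z : {set gT}) : C \subset G -> C \subset Z ->
  coset_vec F G C *m dmx Z = coset_vec F G C.
Proof.
move=> sCG sCZ; rewrite !coset_vecE mulmx_suml; apply: eq_bigr => y Cy.
by rewrite ev_dmx ?(subsetP sCG) // (subsetP sCZ) // scale1r.
Qed.

Lemma ind_module (P : {group gT}) : P \subset G -> mxmodule rG (ind_triv G P).
Proof.
move=> sPG; apply/mxmoduleP => k Gk.
rewrite /ind_triv sumsmxMr; apply/sumsmx_subP => C PC.
rewrite (eqmxMr _ (genmxE _)) coset_vec_mul //; last first.
  by case/rcosetsP: PC => x Gx ->; rewrite mul_subG ?sub1set.
case/rcosetsP: PC => x Gx ->; rewrite -rcosetM; apply: cv_sub_ind.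
by apply/rcosetsP; exists (x * k); rewrite ?groupM.
Qed.

Lemma scott_pgroup (p : nat) (P : {group gT}) (S V : 'M[F]_n) :
  p \in [pchar F]%R -> p.-group G -> mxmodule rG V ->
  (S + V == ind_triv G P)%MS -> mxdirect (S + V) -> (sig <= S)%MS ->
  (S :=: ind_triv G P)%MS.
Proof.
move=> charFp pG modV defSV dxSV sigS.
suff V0 : V = 0.
  apply: eqmx_trans (eqmxP defSV); rewrite V0; apply: eqmx_sym; exact: addsmx0.
apply/eqP; apply: contraTT isT => nzV.
have rV : (0 < \rank V)%N by rewrite lt0n mxrank_eq0.
have := @rfix_pgroup_pchar F p gT charFp G G _ (submod_repr modV) rV pG (subxx G).
rewrite -mxrank_eq0 (rfix_submod modV (subxx G)) mxrank_eq0 in_submodE.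
have [->|nz] := eqVneq (V :&: rfix_mx rG G)%MS 0; first by rewrite mul0mx eqxx.
move=> _; have sigV : (sig <= V)%MS.
  by apply: submx_trans (sig_sub_fix (capmxSr _ _) nz) _; apply: capmxSl.
have /mxdirect_addsP capSV := dxSV.
move: (congr1 (fun M => sig <= M)%MS capSV); rewrite /= sub_capmx sigS sigV submx0.
by rewrite (negbTE sig_neq0).
Qed.


Lemma normal_scott_cent (p : nat) (P : {group gT}) (S : 'M[F]_n) :
  p \in [pchar F]%R -> P \subset G -> G \subset 'N(P) -> p.-group G ->
  is_scott_module G P S -> brauer_indecomposable G p S ->
  G \subset P <*> 'C_G(P).
Proof.
move=> charFp sPG nPG pG [_ [V modV /andP[defSV dxSV]] fixnz] bind.
have sigS := fixed_sig fixnz.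
have eqS := scott_pgroup charFp pG modV defSV dxSV sigS.
pose I := ind_triv (F := F) G P.
have sIf : (I <= rfix_mx rG P)%MS by apply: ind_sub_rfix.
have sfI : (rfix_mx rG P <= I)%MS by apply: rfix_sub_ind.
have pP : p.-group P := pgroupS sPG pG.
pose K := P <*> 'C_G(P).
have sPK : P \subset K := joing_subl _ _.
have sKG : K \subset G by rewrite join_subG sPG subsetIl.
apply/negPn/negP => /subsetPn[h Gh nKh].
have := bind P sPG pP; rewrite /quot_indec_or_zero.
have eqW : (fixed_pts S P :=: I)%MS.
  apply: eqmx_trans (eqS); apply/capmx_idPl; rewrite eqS //.
have sSf : (S <= rfix_mx rG P)%MS by rewrite eqS.
have eqT := den_zero charFp sPG pP sSf.
have fixI q : q \in P -> I *m rG q = I by move/rfix_mxP: sIf; apply.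
have modI : mxmodule rG I := ind_module sPG.
have Zlem (Z : {set gT}) : (forall y k, y \in G -> k \in K -> (y * k \in Z) = (y \in Z)) ->
    [/\ K \subset rstabs rG (I *m dmx Z) & (I *m dmx Z <= I)%MS].
  move=> hZ; split.
    apply/subsetP => k Kk; have Gk := subsetP sKG k Kk.
    rewrite inE Gk /= -mulmxA (dmx_comm (Zq := Z)) // => [|y Gy]; last exact: hZ.
    by rewrite mulmxA submxMr // (mxmoduleP modI).
  apply: submx_trans sfI; apply/rfix_mxP => q Pq; have Gq := subsetP sPG q Pq.
  rewrite -mulmxA (dmx_comm (Zq := Z)) // => [|y Gy]; last by apply: hZ => //; apply: (subsetP sPK).
  by rewrite mulmxA fixI.
have [stA sAI] : [/\ K \subset rstabs rG (I *m dmx K) & (I *m dmx K <= I)%MS].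
  by apply: Zlem => y k Gy Kk; rewrite groupMr.
have [stB sBI] : [/\ K \subset rstabs rG (I *m dmx (~: K)) & (I *m dmx (~: K) <= I)%MS].
  by apply: Zlem => y k Gy Kk; rewrite !inE groupMr.
move/(_ _ _ stA stB).
have T0 m (X : 'M[F]_(m, n)) : (brauer_den S P <= X)%MS by rewrite eqT sub0mx.
rewrite !T0 !eqW sAI sBI.
have hsum : (I *m dmx K + I *m dmx (~: K) == I)%MS.
  apply/andP; split; first by rewrite addsmx_sub sAI.
  by rewrite -{1}[I]mulmx1 -(dmxD K) mulmxDr addmx_sub_adds.
have hcap : (I *m dmx K :&: I *m dmx (~: K) <= brauer_den S P)%MS.
  rewrite eqT submx0; apply/rowV0P => v; rewrite sub_capmx.
  case/andP=> /submxP[u1 ->] /submxP[u2 e2].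
  have : u1 *m (I *m dmx K) *m dmx K = u1 *m (I *m dmx K).
    by rewrite -!mulmxA dmxM setIid.
  rewrite {1}[u1 *m _]e2 -!mulmxA dmxM setIC setICr dmx0 !mulmx0 => <-.
  by [].
move/(_ isT isT isT isT hsum); rewrite hcap !andbT; move/(_ isT); case/orP; rewrite eqT => hX.
  have : (coset_vec F G P *m dmx K <= (0 : 'M[F]_n))%MS.
    apply: submx_trans hX; apply: submxMr; apply: cv_sub_ind.
    by apply/rcosetsP; exists 1%g; rewrite ?mulg1.
  by rewrite cv_dmx // submx0 (negbTE (coset_vec_neq0 sPG _)) //; apply/set0Pn; exists 1%g.
have sPhG : P :* h \subset G by rewrite mul_subG ?sub1set.
have : (coset_vec F G (P :* h) *m dmx (~: K) <= (0 : 'M[F]_n))%MS.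
  apply: submx_trans hX; apply: submxMr; apply: cv_sub_ind.
  by apply/rcosetsP; exists h.
rewrite cv_dmx //; last first.
  apply/subsetP => y /rcosetP[q Pq ->]; rewrite inE; apply: contra nKh => Kqh.
  by rewrite -(groupMl _ (subsetP sPK q Pq)).
rewrite submx0 (negbTE (coset_vec_neq0 sPhG _)) //; apply/set0Pn; exists h.
by rewrite rcoset_refl.
Qed.


Lemma higman (N Q : {group gT}) : N \subset G -> Q \subset G -> Q \subset 'N(N) ->
  exists X : {set gT},
    (forall y k, y \in G -> k \in N -> (y * k \in X) = (y \in X)) /\
    (\sum_(C in rcosets (Q :&: N) Q) dmx (X :* repr C))%R = 1%:M.
Proof.
move=> sNG sQG nNQ.
pose L := (N <*> Q)%G.
have sNL : N \subset L := joing_subl _ _.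
have sQL : Q \subset L := joing_subr _ _.
have eqL y k : k \in L -> (y * k) *: L = y *: L by move=> Lk; rewrite lcosetM lcoset_id.
pose X := [set g in G | g \in repr (g *: L) *: N].
exists X; split.
  move=> y k Gy Nk; have Lk := subsetP sNL k Nk.
  by rewrite !inE eqL // (groupMr _ (subsetP sNG k Nk)) !mem_lcoset mulgA (groupMr _ Nk).
apply: mx_evP => y Gy; rewrite mulmx_sumr mulmx1.
rewrite (eq_bigr (fun C => ((y \in X :* repr C)%:R *: ev y)%R)); last first.
  by move=> C _; rewrite ev_dmx.
rewrite -scaler_suml.
pose t := repr (y *: L).
have tyL : t \in y *: L := mem_repr _ (lcoset_refl L y).
have : y \in t *: L by rewrite (lcoset_eqP tyL) lcoset_refl.
rewrite mem_lcoset /= norm_joinEr // => /mulsgP[m q Nm Qq def].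
have memX c : c \in Q -> (y \in X :* c) = (q * c^-1 \in N).
  move=> Qc; have Lc := subsetP sQL c Qc.
  have Gc := subsetP sQG c Qc.
  rewrite mem_rcoset inE (groupMl _ Gy) groupV Gc /= eqL ?groupV // -/t.
  by rewrite mem_lcoset mulgA def -mulgA (groupMl _ Nm).
have RQ : Q :&: N \subset Q := subsetIl _ _.
have C0in : (Q :&: N) :* q \in rcosets (Q :&: N) Q by apply/rcosetsP; exists q.
rewrite (bigD1 _ C0in) big1 /=.
  rewrite memX ?(repr_rcosets RQ C0in) //.
  have := mem_repr_rcoset (Q :&: N) q; rewrite mem_rcoset => /setIP[_].
  by rewrite -groupV invMg invgK => ->; rewrite addr0 scale1r.
move=> C /andP[QC neC].
suff -> : (y \in X :* repr C) = false by [].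
rewrite memX ?(repr_rcosets RQ QC) //; apply/negP => Nqc.
case/eqP: neC.
rewrite -(rcoset_reprC QC); apply/rcoset_eqP.
rewrite mem_rcoset inE groupM ?groupV ?(repr_rcosets RQ QC) //=.
by rewrite -groupV invMg invgK.
Qed.


Lemma mod_trace (M : 'M[F]_n) m (A : 'M[F]_(m, n)) (I : finType) (J : {pred I}) (f : I -> gT) :
  mxmodule rG M -> (A <= M)%MS -> (forall i, i \in J -> f i \in G) ->
  (A *m (\sum_(i in J) rG (f i))%R <= M)%MS.
Proof.
move=> modM sAM fG; rewrite mulmx_sumr; apply: summx_sub => i Ji.
by apply: submx_trans (mxmoduleP modM _ (fG i Ji)); rewrite submxMr.
Qed.

Lemma zero_case (P N Q : {group gT}) (S V : 'M[F]_n) :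
  P \subset N -> N \subset G -> G \subset 'N(N) -> Q \subset G -> ~~ (Q \subset N) ->
  mxmodule rG S -> mxmodule rG V ->
  (S + V == ind_triv G P)%MS -> mxdirect (S + V) -> N \subset rstab rG S ->
  (fixed_pts S Q <= brauer_den S Q)%MS.
Proof.
move=> sPN sNG nNG sQG nQN modS modV defSV dxSV sNS.
pose R := (Q :&: N)%G.
have sRQ : R \subset Q := subsetIl _ _.
have pRQ : R \proper Q by rewrite /proper sRQ subsetI subxx.
rewrite /brauer_den; apply: (sumsmx_sup R) => //.
have sSN : (S <= rfix_mx rG N)%MS.
  by apply/rfix_mxP => x Nx; apply: (rstab_fix sNS).
have eqF : (fixed_pts S R :=: S)%MS.
  by apply/capmx_idPl; apply: submx_trans sSN (rfix_mxS _ (subsetIr _ _)).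
rewrite /rel_trace (eqmxMr _ eqF).
apply/rV_subP => w; rewrite sub_capmx => /andP[wS wQ].
have nNQ : Q \subset 'N(N) := subset_trans sQG nNG.
have [X [hX sumX]] := higman sNG sQG nNQ.
pose Tr := (\sum_(C in rcosets R Q) rG (repr C))%R.
have TrG C : C \in rcosets R Q -> repr C \in G.
  by move=> RC; apply: (subsetP sQG); apply: repr_rcosets RC.
have hig : w = w *m dmx X *m Tr.
  rewrite mulmx_sumr.
  rewrite (eq_bigr (fun C => w *m dmx (X :* repr C))) => [|C RC].
    by rewrite -mulmx_sumr sumX mulmx1.
  have Qc := repr_rcosets sRQ RC.
  rewrite -mulmxA (dmx_comm (Zq := X :* repr C)) ?TrG // => [|y Gy]; last first.
    by rewrite mem_rcoset mulgK.
  by rewrite mulmxA; move/rfix_mxP: wQ => ->.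
have wDI : (w *m dmx X <= S + V)%MS.
  rewrite (eqmxP defSV); apply: submx_trans (rfix_sub_ind sPN sNG nNG).
  apply/rfix_mxP => k Nk; have Gk := subsetP sNG k Nk.
  rewrite -mulmxA (dmx_comm (Zq := X)) // => [|y Gy]; last exact: hX.
  by rewrite mulmxA; move/rfix_mxP: (submx_trans wS sSN) => ->.
have /sub_addsmxP[[u1 u2] /= de] := wDI.
have e2 : (u2 *m V *m Tr <= S)%MS.
  have -> : u2 *m V *m Tr = w - u1 *m S *m Tr.
    by rewrite {1}hig de mulmxDl addrAC subrr add0r.
  by rewrite addmx_sub ?eqmx_opp // mod_trace ?submxMl.
have e2V : (u2 *m V *m Tr <= V)%MS by rewrite mod_trace ?submxMl.
have /mxdirect_addsP capSV := dxSV.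
have z2 : u2 *m V *m Tr = 0.
  by apply/eqP; rewrite -submx0 -capSV sub_capmx e2 e2V.
by rewrite hig de mulmxDl z2 addr0 -!mulmxA submxMl.
Qed.


Lemma in_case (p : nat) (N Q : {group gT}) (S : 'M[F]_n) :
  p \in [pchar F]%R -> Q \subset N -> N \subset G -> N \subset rstab rG S ->
  p.-group Q -> mx_indecomposable G S ->
  (forall g, g \in G -> exists n1, exists n2, exists c,
      [/\ n1 \in N, n2 \in N, c \in 'C_G(Q) & g = n1 * c * n2]) ->
  quot_indec_or_zero (Q <*> 'C_G(Q)) (fixed_pts S Q) (brauer_den S Q).
Proof.
move=> charFp sQN sNG sNS pQ [modS [nzS indS]] decG.
have sQG := subset_trans sQN sNG.
have sSQ : (S <= rfix_mx rG Q)%MS.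
  by apply/rfix_mxP => x Qx; apply: (rstab_fix sNS) => //; apply: (subsetP sQN).
have eqW : (fixed_pts S Q :=: S)%MS by apply/capmx_idPl.
have eqT := den_zero charFp sQG pQ sSQ.
move=> A B stA stB; rewrite !eqW !eqT => _ sAS _ sBS sumAB capAB.
have stG (X : 'M[F]_n) : Q <*> 'C_G(Q) \subset rstabs rG X -> (X <= S)%MS ->
    G \subset rstabs rG X.
  move=> stX sXS; apply/subsetP => g Gg.
  have [n1 [n2 [c [Nn1 Nn2 Cc ->]]]] := decG g Gg.
  have Gc : c \in G by case/setIP: Cc.
  have Kc : c \in Q <*> 'C_G(Q) by apply: (subsetP (joing_subr _ _)).
  have G1 := subsetP sNG _ Nn1; have G2 := subsetP sNG _ Nn2.
  rewrite inE !groupM //= !repr_mxM ?groupM // !mulmxA (rstab_fix sNS sXS) //.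
  have := subsetP stX c Kc; rewrite inE Gc /= => sXc.
  by rewrite (rstab_fix sNS) // (submx_trans sXc).
have := indS A B (stG _ stA sAS) (stG _ stB sBS) (sub0mx _ _) sAS (sub0mx _ _) sBS sumAB.
by rewrite capAB; apply.
Qed.

End Reg.

Local Open Scope group_scope.
Local Open Scope ring_scope.

Theorem theorem1p4 (k : closedFieldType) (p : nat) (gT : finGroupType)
    (G P : {group gT}) :
  (p \in [pchar k])%R ->
  P \subset G -> p.-group P ->
  p.-group 'N_G(P) ->
  forall S : 'M[k]_(gcard G),
    is_scott_module G P S ->
    P \subset rstab (regular_repr k G) S ->
    (exists2 S' : 'M[k]_(gcard 'N_G(P)),
        is_scott_module 'N_G(P) P S' & brauer_indecomposable 'N_G(P) p S') ->
    brauer_indecomposable G p S.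
Proof.
Local Open Scope group_scope.
move=> charFp sPG pP pNP S scS sPS [S' scS' biS'].
have [indS [V modV /andP[defSV dxSV]] fixnz] := scS.
have modS : mxmodule (regular_repr k G) S := indS.1.
pose N := rstab_group (regular_repr k G) S.
have sNG : N \subset G := rstab_sub _ _.
have nNG : G \subset 'N(N) := rstab_norm modS.
have sPN : P \subset N := sPS.
have sigS := fixed_sig fixnz.
have pdiv := scott_sylow charFp sPN sNG (subxx _) modV defSV dxSV sigS.
have prp := pcharf_prime charFp.
have sylP : p.-Sylow(N) P by rewrite /pHall sPN pP /= p'natE.
have nsNG : N <| G by rewrite /normal sNG nNG.
have frat := Frattini_arg nsNG sylP.
pose H := 'N_G(P)%G.
have sPH : P \subset H by rewrite subsetI sPG normG.
have nPH : H \subset 'N(P) := subsetIr _ _.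
have cent := normal_scott_cent charFp sPH nPH pNP scS' biS'.
move=> Q sQG pQ.
have [sQN | nQN] := boolP (Q \subset N); last first.
  have sWT := zero_case sPN sNG nNG sQG nQN modS modV defSV dxSV (subxx _).
  move=> A B _ _ sTA sAW _ _ _ _; apply/orP; left.
  by rewrite /= sTA (submx_trans sAW sWT).
apply: (in_case charFp sQN sNG (subxx _) pQ indS) => g Gg.
have [x Nx sQxP] := Sylow_Jsub sylP sQN pQ.
have Gx := subsetP sNG x Nx.
have /mulsgP[m h Nm Hh ->] : g \in N * 'N_G(P) by rewrite frat.
have sCH : 'C_H(P) \subset 'N(P) by rewrite subIset // cent_sub orbT.
move: (subsetP cent h Hh); rewrite norm_joinEr // => /mulsgP[a c Pa Cc ->].
have [Hc cPc] := setIP Cc.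
have Gc : c \in G by case/setIP: Hc.
have cQx : c \in 'C(Q :^ x) := subsetP (centS sQxP) c cPc.
rewrite centJ mem_conjg in cQx.
exists (m * a * x^-1), x, (c ^ x^-1); split => //.
- by rewrite !groupM ?groupV // (subsetP sPN).
- by rewrite inE cQx andbT groupJ ?groupV.
by rewrite conjgE invgK !mulgA !mulgVK.
Qed.
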